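(* Let $G=(V,E)$ be a directed graph with $n$ vertices and $m$ edges and let $\phi\in(0,1)$. Consider the following procedure: start with $\mathcal{X}=\{V\}$ and $E_{Rest}=\emptyset$; while there is $X\in\mathcal{X}$ and $S\subseteq X$ such that $(S,X\setminus S)$ is a $\phi$-out-sparse cut in $G[X]$ or in $\overleftarrow{G}[X]$, replace $X$ in $\mathcal{X}$ by $S$ and $X\setminus S$, and add to $E_{Rest}$ the smaller of the two edge sets $E_{G[X]}(S,X\setminus S)$ and $E_{G[X]}(X\setminus S,S)$. Then, for every choice of the sparse cuts, the procedure terminates after at most $n-1$ iterations, and its output satisfies: (i) $G[X]$ is a $\phi$-expander for every $X\in\mathcal{X}$; (ii) $|E_{Rest}|\le 2\phi m(\log_2(2m)+1)$; (iii) the graph $G/\{X\}_{X\in\mathcal{X}}\setminus E_{Rest}$ has no directed cycle other than self-loops.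
   Context: Graphs are directed multigraphs (self-loops allowed); $\deg_G(v)$ counts incident edges with a self-loop counting $2$; $\mathrm{vol}_G(S)=\sum_{v\in S}\deg_G(v)$; $E_G(A,B)$ is the set of edges with tail in $A$ and head in $B$; $\overleftarrow{G}$ is $G$ with edges reversed; $G[X]$ is the induced subgraph; $G/\{X\}_{X\in\mathcal{X}}$ is $G$ with each $X$ contracted to a single vertex. In a graph $H$ on vertex set $X$, a cut $(S,X\setminus S)$ is $\phi$-out-sparse if $\mathrm{vol}_H(S)\le\mathrm{vol}_H(X\setminus S)$ and $|E_H(S,X\setminus S)|<\phi\,\mathrm{vol}_H(S)$; $H$ is a $\phi$-expander if neither $H$ nor $\overleftarrow{H}$ has a $\phi$-out-sparse cut. *)

(* Defs.v *)
From HB Require Import structures.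
From mathcomp Require Import all_boot all_order all_algebra.
From mathcomp Require Import all_classical all_reals exp.
Set Implicit Arguments. Unset Strict Implicit. Unset Printing Implicit Defensive.
Import Order.TTheory GRing.Theory Num.Theory.
Local Open Scope ring_scope.

(* A directed multigraph: finite vertex type V, finite edge type E, each edge
   e has tail tl e and head hd e (self-loops and parallel edges allowed).
   The reversed graph is obtained by swapping tl and hd. *)

Section Graph.
Variables (V E : finType) (tl hd : E -> V).

Definition inducedE (X : {set V}) : {set E} :=
  [set e | (tl e \in X) && (hd e \in X)].

(* deg_{G[X]}(v): incident edges of G[X], a self-loop counting twice. *)
Definition deg_in (X : {set V}) (v : V) : nat :=
  #|[set e in inducedE X | tl e == v]| + #|[set e in inducedE X | hd e == v]|.

Definition vol_in (X S : {set V}) : nat := \sum_(v in S) deg_in X v.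

Definition cutE (X A B : {set V}) : {set E} :=
  [set e in inducedE X | (tl e \in A) && (hd e \in B)].

Definition out_sparse (R : realType) (phi : R) (X S : {set V}) : Prop :=
  [/\ S \subset X,
      (vol_in X S <= vol_in X (X :\: S))%N
    & (#|cutE X S (X :\: S)|%:R < phi * (vol_in X S)%:R)].

End Graph.

Definition expander (R : realType) (V E : finType) (tl hd : E -> V)
    (phi : R) (X : {set V}) : Prop :=
  forall S : {set V}, S \subset X ->
    ~ out_sparse tl hd phi X S /\ ~ out_sparse hd tl phi X S.

(* State of the procedure: (the family \mathcal{X}, E_Rest). *)
Definition state (V E : finType) := ({set {set V}} * {set E})%type.

Definition step (R : realType) (V E : finType) (tl hd : E -> V) (phi : R)
    (s s' : state V E) : Prop :=
  exists (X S : {set V}),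
    [/\ X \in s.1,
        out_sparse tl hd phi X S \/ out_sparse hd tl phi X S,
        s'.1 = (s.1 :\ X) :|: [set S; X :\: S]
      & (let F1 := cutE tl hd X S (X :\: S) in
         let F2 := cutE tl hd X (X :\: S) S in
         (#|F1| <= #|F2|)%N /\ s'.2 = s.2 :|: F1
         \/ (#|F2| <= #|F1|)%N /\ s'.2 = s.2 :|: F2)].

(* run s0 [:: s1; ...; sk]: s0 -> s1 -> ... -> sk are k successive iterations. *)
Fixpoint run (R : realType) (V E : finType) (tl hd : E -> V) (phi : R)
    (s0 : state V E) (l : seq (state V E)) : Prop :=
  match l with
  | [::] => True
  | s1 :: l' => step tl hd phi s0 s1 /\ run tl hd phi s1 l'
  end.

Definition init_state (V E : finType) : state V E := ([set [set: V]], finset.set0).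

Definition terminal (R : realType) (V E : finType) (tl hd : E -> V) (phi : R)
    (s : state V E) : Prop :=
  ~ exists X S : {set V}, X \in s.1 /\
      (out_sparse tl hd phi X S \/ out_sparse hd tl phi X S).

(* Edge relation of G / {X}_{X in P} \ Er between distinct contracted vertices
   (self-loops of the contracted graph are ignored). *)
Definition qedge (V E : finType) (tl hd : E -> V) (P : {set {set V}}) (Er : {set E})
    : rel {set V} :=
  fun B1 B2 => [&& B1 \in P, B2 \in P, B1 != B2 &
    [exists e, [&& e \notin Er, tl e \in B1 & hd e \in B2]]].

Definition no_nontrivial_cycle (V E : finType) (tl hd : E -> V)
    (P : {set {set V}}) (Er : {set E}) : Prop :=
  forall B1 B2 : {set V}, qedge tl hd P Er B1 B2 -> ~~ connect (qedge tl hd P Er) B2 B1.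

Definition log2 (R : realType) (x : R) : R := ln x / ln 2.

(* Main.v *)
Require Import Defs.
From HB Require Import structures.
From mathcomp Require Import all_boot all_order all_algebra.
From mathcomp Require Import all_classical all_reals exp.
From mathcomp Require Import ring lra zify.
Import Order.TTheory GRing.Theory Num.Theory.
Local Open Scope ring_scope.

Definition fl (R : realType) (x : nat) : R := x%:R * log2 (x%:R : R).

Lemma ln2_gt0 (R : realType) : 0 < ln (2 : R).
Proof. by apply: ln_gt0; rewrite ltr1n. Qed.

Lemma log2_ge0 (R : realType) (n : nat) : (0 < n)%N -> 0 <= log2 (n%:R : R).
Proof.
move=> hn; rewrite /log2 divr_ge0 //; last exact: ltW (ln2_gt0 R).
by apply: ln_ge0; rewrite ler1n.
Qed.

Lemma log2_le (R : realType) (m n : nat) : (0 < m)%N -> (m <= n)%N ->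
  log2 (m%:R : R) <= log2 (n%:R : R).
Proof.
move=> hm hmn; rewrite /log2 ler_pM2r ?invr_gt0 ?ln2_gt0 //.
rewrite ler_ln ?ler_nat // posrE ltr0n //. exact: leq_trans hmn.
Qed.

Lemma log2_double (R : realType) (a : nat) : (0 < a)%N ->
  log2 ((2 * a)%N%:R : R) = 1 + log2 (a%:R : R).
Proof.
move=> ha; rewrite /log2 natrM lnM ?posrE ?ltr0n //.
rewrite mulrDl divff //; apply: lt0r_neq0; exact: ln2_gt0.
Qed.

Lemma fl_ge0 (R : realType) n : 0 <= fl R n.
Proof.
rewrite /fl; case: n => [|n]; first by rewrite mul0r.
by rewrite mulr_ge0 // log2_ge0.
Qed.

Lemma fl_le (R : realType) m n : (m <= n)%N -> fl R m <= fl R n.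
Proof.
case: m => [|m] hmn; first by rewrite /fl mul0r fl_ge0.
rewrite /fl ler_pM ?ler_nat ?log2_ge0 ?log2_le //.
Qed.

Lemma fl_split (R : realType) a b : (0 < a)%N -> (a <= b)%N ->
  fl R a + fl R b + a%:R <= fl R (a + b).
Proof.
move=> ha hab.
have h1 : log2 (a%:R : R) + 1 <= log2 ((a + b)%N%:R).
  rewrite addrC -log2_double //; apply: log2_le; rewrite ?muln_gt0 //. lia.
have h2 : log2 (b%:R : R) <= log2 ((a + b)%N%:R).
  apply: log2_le; [exact: leq_trans hab| exact: leq_addl].
rewrite /fl natrD mulrDl.
have : a%:R * (log2 (a%:R : R) + 1) <= a%:R * log2 ((a + b)%N%:R).
  by rewrite ler_pM2l ?ltr0n.
have : b%:R * log2 (b%:R : R) <= b%:R * log2 ((a + b)%N%:R).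
  by rewrite ler_pM2l ?ltr0n //; exact: leq_trans hab.
rewrite mulrDr mulr1. rewrite natrD. lra.
Qed.

Lemma sub_nat (T : finType) (A C : {set T}) (g : T -> nat) :
  (\sum_(i in A :|: C) g i <= \sum_(i in A) g i + \sum_(i in C) g i)%N.
Proof.
rewrite (big_setID A) /= finset.setUK finset.setDUl finset.setDv finset.set0U.
rewrite leq_add2l [X in (_ <= X)%N](big_setID A) /=; exact: leq_addl.
Qed.

Lemma sub_real (R : realDomainType) (T : finType) (A C : {set T}) (g : T -> R) :
  (forall i, 0 <= g i) ->
  \sum_(i in A :|: C) g i <= \sum_(i in A) g i + \sum_(i in C) g i.
Proof.
move=> g0; rewrite (big_setID A) /= finset.setUK finset.setDUl finset.setDv finset.set0U.
rewrite lerD2l [X in (_ <= X)](big_setID A) /= lerDr.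
by apply: sumr_ge0.
Qed.

Lemma pos_of_lt (R : realType) (phi : R) (c a : nat) :
  c%:R < phi * a%:R -> (0 < a)%N.
Proof.
move=> h; rewrite lt0n; apply/negP => /eqP h0.
by move: h; rewrite h0 mulr0 ltNge ler0n.
Qed.

Lemma aux1 a b : (a < b)%N -> ((2 * a).+1 < 2 * b)%N. Proof. lia. Qed.
Lemma aux2 a b : (a < b)%N -> (2 * a < (2 * b).+1)%N. Proof. lia. Qed.
Lemma aux3 a b : (a < b)%N -> (2 * a < 2 * b)%N. Proof. lia. Qed.

Section G.
Variables (V E : finType) (tl hd : E -> V).

Lemma inducedE_sym X : inducedE hd tl X = inducedE tl hd X.
Proof. by apply/setP => e; rewrite !inE andbC. Qed.

Lemma deg_sym X v : deg_in hd tl X v = deg_in tl hd X v.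
Proof. by rewrite /deg_in inducedE_sym addnC. Qed.

Lemma vol_sym X S : vol_in hd tl X S = vol_in tl hd X S.
Proof. by apply: eq_bigr => v _; rewrite deg_sym. Qed.

Lemma cutE_sym X S T : cutE hd tl X S T = cutE tl hd X T S.
Proof.
by apply/setP => e; rewrite /cutE inducedE_sym !inE [(hd e \in S) && _]andbC.
Qed.

Lemma inducedE_mono (S X : {set V}) : S \subset X -> inducedE tl hd S \subset inducedE tl hd X.
Proof.
move=> sSX; apply/fintype.subsetP => e; rewrite /inducedE !inE => /andP [a b].
by rewrite (fintype.subsetP sSX _ a) (fintype.subsetP sSX _ b).
Qed.

Lemma vol_mono (S X : {set V}) : S \subset X -> (vol_in tl hd S S <= vol_in tl hd X S)%N.
Proof.
move=> sSX; apply: leq_sum => v _; rewrite /deg_in leq_add //;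
  apply: subset_leq_card; apply/fintype.subsetP => e;
  rewrite /inducedE !inE => /andP [/andP [a b] ->];
  by rewrite andbT (fintype.subsetP sSX _ a) (fintype.subsetP sSX _ b).
Qed.

Lemma vol_split (S X : {set V}) : S \subset X ->
  vol_in tl hd X X = (vol_in tl hd X S + vol_in tl hd X (X :\: S))%N.
Proof.
move=> sSX; rewrite /vol_in (big_setID S) /=.
by move/finset.setIidPr: sSX => ->.
Qed.

Lemma vol_set0 (X : {set V}) : vol_in tl hd X finset.set0 = 0%N.
Proof. by rewrite /vol_in big_set0. Qed.

Lemma sparse_pos (R : realType) (phi : R) (X S : {set V}) :
  @out_sparse V E tl hd R phi X S -> (0 < vol_in tl hd X S)%N.
Proof.
case=> _ _ h; rewrite lt0n; apply/negP => /eqP h0.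
by move: h; rewrite h0 mulr0 ltNge ler0n.
Qed.


Variables (R : realType) (phi : R).

Lemma step_inv (s s' : state V E) : step tl hd phi s s' ->
  exists (X S : {set V}) (F : {set E}),
   [/\ X \in s.1, S \subset X, (0 < vol_in tl hd X S)%N,
       (vol_in tl hd X S <= vol_in tl hd X (X :\: S))%N &
       #|F|%:R < phi * (vol_in tl hd X S)%:R] /\
   [/\ s'.1 = (s.1 :\ X) :|: [set S; X :\: S],
       s'.2 = s.2 :|: F
     & (F = cutE tl hd X S (X :\: S) \/ F = cutE tl hd X (X :\: S) S)].
Proof.
case=> X [S [hX hsp h1 h2]].
have [sSX hvol hpos hc] : [/\ S \subset X,
   (vol_in tl hd X S <= vol_in tl hd X (X :\: S))%N,
   (0 < vol_in tl hd X S)%N &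
   (#|cutE tl hd X S (X :\: S)|%:R < phi * (vol_in tl hd X S)%:R) \/
   (#|cutE tl hd X (X :\: S) S|%:R < phi * (vol_in tl hd X S)%:R)].
  case: hsp => hs.
    by case: hs => a b c; split => //; [exact: pos_of_lt c| left].
  case: hs => a b c; rewrite !vol_sym in b c; split => //; [exact: pos_of_lt c| right].
  by rewrite -cutE_sym.
case: h2 => [[hle ->]|[hle ->]].
  exists X, S, (cutE tl hd X S (X :\: S)); split; split => //; last by left.
  case: hc => // hc; apply: le_lt_trans hc; by rewrite ler_nat.
exists X, S, (cutE tl hd X (X :\: S) S); split; split => //; last by right.
case: hc => // hc; apply: le_lt_trans hc; by rewrite ler_nat.
Qed.


Definition Phi (P : {set {set V}}) : nat := \sum_(B in P) (#|B| - 1).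

Lemma Phi_step (P : {set {set V}}) (X S : {set V}) : X \in P -> S \subset X ->
  (0 < #|S|)%N -> (0 < #|X :\: S|)%N ->
  (Phi ((P :\ X) :|: [set S; X :\: S]) + 1 <= Phi P)%N.
Proof.
move=> hX sSX nS nT.
rewrite /Phi (big_setD1 X hX) /=.
apply: (@leq_trans ((\sum_(B in P :\ X) (#|B| - 1) + ((#|S| - 1) + (#|X :\: S| - 1))) + 1)%N).
  rewrite leq_add2r; apply: leq_trans (sub_nat _ _ _ _) _; rewrite leq_add2l.
  by apply: leq_trans (sub_nat _ _ _ _) _; rewrite !big_set1.
have hc := cardsID S X; rewrite (finset.setIidPr sSX) in hc.
move: nS nT hc; set a := #|S|; set b := #|X :\: S|; set c := #|X|; set d := (\sum_(B in _) _)%N; move=> nS nT hc; lia.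
Qed.

Definition Psi (P : {set {set V}}) : R := \sum_(B in P) fl R (vol_in tl hd B B).

Lemma Psi_step (P : {set {set V}}) (X S : {set V}) : X \in P -> S \subset X ->
  (0 < vol_in tl hd X S)%N -> (vol_in tl hd X S <= vol_in tl hd X (X :\: S))%N ->
  Psi ((P :\ X) :|: [set S; X :\: S]) + (vol_in tl hd X S)%:R <= Psi P.
Proof.
move=> hX sSX ha hab.
have g0 : forall B : {set V}, 0 <= fl R (vol_in tl hd B B) by move=> B; exact: fl_ge0.
rewrite /Psi (big_setD1 X hX) /=.
have h1 := @sub_real R _ (P :\ X) [set S; X :\: S] _ g0.
have h2 := @sub_real R _ [set S] [set X :\: S] _ g0.
rewrite !big_set1 in h2.
have h3 : fl R (vol_in tl hd S S) <= fl R (vol_in tl hd X S) by apply: fl_le; exact: vol_mono.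
have h4 : fl R (vol_in tl hd (X :\: S) (X :\: S)) <= fl R (vol_in tl hd X (X :\: S)).
  apply: fl_le; apply: vol_mono; exact: subsetDl.
have h5 := @fl_split R _ _ ha hab.
rewrite -vol_split // in h5.
set A := \sum_(i in _ :|: _) _ in h1 *.
set B := \sum_(i in P :\ X) _ in h1 *.
lra.
Qed.

Definition ranked (P : {set {set V}}) (Er : {set E}) :=
  exists r : {set V} -> nat, forall B1 B2, qedge tl hd P Er B1 B2 -> (r B1 < r B2)%N.

Lemma ranked_step (P : {set {set V}}) (Er Er' : {set E}) (X hi lo : {set V}) :
  X \in P -> hi \subset X -> lo \subset X -> Er \subset Er' ->
  (forall e, tl e \in hi -> hd e \in lo -> e \in Er') ->
  ranked P Er -> ranked ((P :\ X) :|: [set hi; lo]) Er'.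
Proof.
move=> hX shi slo sEr hEr [r hr].
exists (fun B => if B == hi then (2 * r X).+1 else if B == lo then (2 * r X)%N else (2 * r B)%N).
move=> B1 B2 /and4P [h1 h2 hne /existsP [e /and3P [he t1 t2]]].
have heo : e \notin Er by apply: contra he; exact: (fintype.subsetP sEr).
have old : forall C1 C2, C1 \in P -> C2 \in P -> C1 != C2 -> tl e \in C1 -> hd e \in C2 ->
    (r C1 < r C2)%N.
  move=> C1 C2 c1 c2 cne a b; apply: hr; rewrite /qedge c1 c2 cne /=.
  by apply/existsP; exists e; rewrite heo a b.
have mem : forall B, B \in (P :\ X) :|: [set hi; lo] -> B != hi -> B != lo -> B \in P /\ B != X.
  move=> B; rewrite !inE => /orP [/andP [-> ->] //| /orP [->|->] //].
have neqs : forall A B : {set V}, A != B -> B != A by move=> A B; rewrite eq_sym.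
case: (eqVneq B1 hi) => [E1|N1].
  subst B1; have tX : tl e \in X by exact: (fintype.subsetP shi).
  rewrite /=.
  case: (eqVneq B2 hi) => [E2|N2]; first by move: hne; rewrite E2 eqxx.
  case: (eqVneq B2 lo) => [E3|N3]; first by subst B2; move: he; rewrite hEr.
  have [m2 n2] := mem _ h2 N2 N3.
  exact: aux1 (old X B2 hX m2 (neqs _ _ n2) tX t2).
rewrite /=.
case: (eqVneq B1 lo) => [E1|N1'].
  subst B1; have tX : tl e \in X by exact: (fintype.subsetP slo).
  rewrite /=.
  case: (eqVneq B2 hi) => [E2|N2]; first by [].
  case: (eqVneq B2 lo) => [E3|N3]; first by move: hne; rewrite E3 eqxx.
  have [m2 n2] := mem _ h2 N2 N3.
  exact: aux3 (old X B2 hX m2 (neqs _ _ n2) tX t2).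
have [m1 n1] := mem _ h1 N1 N1'.
case: (eqVneq B2 hi) => [E2|N2].
  subst B2; have hX' : hd e \in X by exact: (fintype.subsetP shi).
  exact: aux2 (old B1 X m1 hX n1 t1 hX').
case: (eqVneq B2 lo) => [E3|N3].
  subst B2; have hX' : hd e \in X by exact: (fintype.subsetP slo).
  exact: aux3 (old B1 X m1 hX n1 t1 hX').
have [m2 n2] := mem _ h2 N2 N3.
exact: aux3 (old B1 B2 m1 m2 hne t1 t2).
Qed.

Lemma ranked_nocycle (P : {set {set V}}) (Er : {set E}) :
  ranked P Er -> no_nontrivial_cycle tl hd P Er.
Proof.
move=> [r hr] B1 B2 h; apply/negP => /connectP [p hp hl].
have key : forall x p, path (qedge tl hd P Er) x p -> (r x <= r (last x p))%N.
  move=> x q; elim: q x => [|y q IH] x //= /andP [hxy hq].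
  exact: leq_trans (ltnW (hr _ _ hxy)) (IH _ hq).
have := key _ _ hp; rewrite -hl; have := hr _ _ h; clear; lia.
Qed.



Lemma vol_card (X S : {set V}) : (0 < vol_in tl hd X S)%N -> (0 < #|S|)%N.
Proof.
move=> h; rewrite lt0n cards_eq0; apply/negP => /eqP E0.
by move: h; rewrite E0 vol_set0.
Qed.

Lemma sum_tl (f : E -> V) : (\sum_v #|[set e in inducedE tl hd [set: V] | f e == v]| = #|E|)%N.
Proof.
rewrite -[RHS]sum1_card (partition_big f xpredT) //=.
apply: eq_bigr => v _; rewrite sum1dep_card; apply: eq_card => e.
by rewrite /inducedE !inE.
Qed.

Lemma vol_total : vol_in tl hd [set: V] [set: V] = (2 * #|E|)%N.
Proof.
rewrite /vol_in /deg_in.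
rewrite (eq_bigl xpredT); last by move=> v; rewrite inE.
by rewrite big_split /= !sum_tl mul2n addnn.
Qed.

Lemma run_inv (hphi : 0 < phi) (s0 : state V E) l : run tl hd phi s0 l ->
  [/\ (size l + Phi (last s0 l).1 <= Phi s0.1)%N,
      #|(last s0 l).2|%:R + phi * Psi (last s0 l).1 <= #|s0.2|%:R + phi * Psi s0.1
    & ranked s0.1 s0.2 -> ranked (last s0 l).1 (last s0 l).2].
Proof.
elim: l s0 => [|s1 l IH] s0 /=; first by split.
move=> [hs hr]; have [a b c] := IH _ hr.
have [X [S [F [[hX sSX ha hab hF] [h1 h2 hFc]]]]] := step_inv _ _ hs.
have hT : (0 < #|X :\: S|)%N.
  apply: (vol_card X); exact: leq_trans hab.
split.
- have := Phi_step _ _ _ hX sSX (vol_card _ _ ha) hT; rewrite -h1.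
  move: a; set x := Phi _; set y := Phi _; set z := Phi _; move=> a b'; clear -a b'. lia.
- have hc : (#|s1.2| <= #|s0.2| + #|F|)%N by rewrite h2; exact: (leq_card_setU _ _).1.
  have hP := Psi_step _ _ _ hX sSX ha hab; rewrite -h1 in hP.
  have hP' : phi * (Psi s1.1 + (vol_in tl hd X S)%:R) <= phi * Psi s0.1.
    by rewrite ler_pM2l.
  rewrite mulrDr in hP'.
  have hc' : #|s1.2|%:R <= #|s0.2|%:R + #|F|%:R :> R by rewrite -natrD ler_nat.
  move: b hP' hc' hF.
  set A := (#|_|%:R : R); set B := phi * _; set C := phi * _; set D := phi * _.
  set G := (#|s1.2|%:R : R); set H := (#|s0.2|%:R : R); set I := (#|F|%:R : R).
  lra.
- move=> hr0; apply: c; rewrite h1 h2.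
  case: hFc => hFc.
    apply: (ranked_step _ _ _ X S (X :\: S) hX sSX (subsetDl X S) (finset.subsetUl _ _) _ hr0).
    move=> e t1 t2; rewrite finset.in_setU; apply/orP; right; rewrite hFc /cutE /inducedE.
    have tX := fintype.subsetP sSX _ t1; move: t2; rewrite !inE => /andP [nS hX'].
    by rewrite tX hX' t1 nS.
  have -> : [set S; X :\: S] = [set X :\: S; S] by rewrite finset.setUC.
  apply: (ranked_step _ _ _ X (X :\: S) S hX (subsetDl X S) sSX (finset.subsetUl _ _) _ hr0).
  move=> e t1 t2; rewrite finset.in_setU; apply/orP; right; rewrite hFc /cutE /inducedE.
  have tX := fintype.subsetP sSX _ t2; move: t1; rewrite !inE => /andP [nS hX'].
  by rewrite tX hX' t2 nS.
Qed.

End G.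

Theorem mainTheorem4 (R : realType) (V E : finType) (tl hd : E -> V) (phi : R)
    (hphi0 : 0 < phi) (hphi1 : phi < 1) :
  (forall l : seq (state V E), run tl hd phi (init_state V E) l ->
     (size l <= #|V| - 1)%N)
  /\
  (forall l : seq (state V E), run tl hd phi (init_state V E) l ->
     let s := last (init_state V E) l in
     terminal tl hd phi s ->
     [/\ (forall X, X \in s.1 -> expander tl hd phi X),
         (#|s.2|%:R <= 2 * phi * #|E|%:R * (log2 (2 * #|E|%:R) + 1))
       & no_nontrivial_cycle tl hd s.1 s.2]).
Proof.
split.
  move=> l hrun; have [a _ _] := @run_inv V E tl hd R phi hphi0 _ _ hrun.
  move: a; rewrite /Phi /init_state /= big_set1 cardsT => a.
  exact: leq_trans (leq_addr _ _) a.
move=> l hrun s hterm; have [_ b c] := @run_inv V E tl hd R phi hphi0 _ _ hrun.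
split.
- move=> X hX S sSX; split => h; apply: hterm; exists X, S; split => //; [left|right] => //.
- have hpsi : 0 <= @Psi V E tl hd R s.1 by apply: sumr_ge0 => B _; exact: fl_ge0.
  move: b; rewrite -/s {2}/Psi /init_state /= big_set1 cards0 vol_total /fl natrM.
  set L := log2 _; set P := Psi V E tl hd R s.1; set N := (#|E|%:R : R); set C := (#|s.2|%:R : R).
  have hN : 0 <= N by rewrite ler0n.
  move=> b.
  have : phi * P >= 0 by rewrite mulr_ge0 // ltW.
  have : phi * N >= 0 by rewrite mulr_ge0 // ltW.
  have e1 : phi * (2 * N * L) = 2 * (phi * N) * L by ring.
  have e2 : 2 * phi * N * (L + 1) = 2 * (phi * N) * L + 2 * (phi * N) by ring.
  rewrite e2; rewrite e1 in b.
  set Q := 2 * (phi * N) * L in b *; set PN := phi * N; set PP := phi * P in b *.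
  move=> h1 h2. rewrite /= in b. lra.
- apply: ranked_nocycle; apply: c.
  exists (fun _ => 0%N) => B1 B2 /and4P [h1 h2 hne _].
  by move: h1 h2 hne; rewrite /init_state /= !inE => /eqP -> /eqP ->; rewrite eqxx.
Qed.
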